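(* Let $H$ be a set of at least two pairwise disjoint line segments in the plane, $s\in H$, and $x$ a point of the farthest Voronoi region $V_f(s,H)$. Let $p\in s$ be the point with $d(p,x)=d(s,x)$ and let $r(s,x)$ be the ray emanating from $p$, passing through $x$ and extending to infinity. Then $r(s,x)$ intersects the boundary of $V_f(s,H)$ at a point $a_x$ (lying on the segment from $p$ to $x$), and the unbounded portion of $r(s,x)$ beyond $a_x$ lies entirely in $V_f(s,H)$.
   Context: Distances are Euclidean: $d(x,s)=\min_{q\in s}d(x,q)$. The farthest Voronoi region is $V_f(s,H)=\{x: d(x,s)>d(x,t)\ \forall t\in H\setminus\{s\}\}$. *)

(* Defs.v *)
From Stdlib Require Import Reals Lra List ClassicalEpsilon.
Open Scope R_scope.

Definition point : Type := (R * R)%type.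

Definition edist (x y : point) : R :=
  sqrt ((fst x - fst y) ^ 2 + (snd x - snd y) ^ 2).

Definition segment : Type := (point * point)%type.

Definition on_seg (q : point) (s : segment) : Prop :=
  exists l : R, 0 <= l <= 1 /\
    q = ((1 - l) * fst (fst s) + l * fst (snd s),
         (1 - l) * snd (fst s) + l * snd (snd s)).

Definition is_min_dist (x : point) (s : segment) (r : R) : Prop :=
  (exists q, on_seg q s /\ edist x q = r) /\
  (forall q, on_seg q s -> r <= edist x q).

(* d(x,s) = min_{q in s} d(x,q)  (the minimum exists, segments being compact). *)
Definition seg_dist (x : point) (s : segment) : R :=
  epsilon (inhabits 0) (fun r => is_min_dist x s r).

Definition Vf (s : segment) (H : list segment) (x : point) : Prop :=
  forall t, In t H -> t <> s -> seg_dist x s > seg_dist x t.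

Definition on_boundary (A : point -> Prop) (z : point) : Prop :=
  forall eps, eps > 0 ->
    (exists y, edist z y < eps /\ A y) /\ (exists y, edist z y < eps /\ ~ A y).

Definition ray_pt (p x : point) (t : R) : point :=
  (fst p + t * (fst x - fst p), snd p + t * (snd x - snd p)).

Definition pairwise_disjoint (H : list segment) : Prop :=
  forall s1 s2, In s1 H -> In s2 H -> s1 <> s2 ->
    forall q, ~ (on_seg q s1 /\ on_seg q s2).

(* Main.v *)
Require Import Defs.
From Stdlib Require Import Reals List.
From Stdlib Require Import Lra Psatz Classical ClassicalEpsilon.
Open Scope R_scope.

Lemma quad (x a b : point) l :
  (fst x - ((1-l)*fst a + l*fst b))^2 + (snd x - ((1-l)*snd a + l*snd b))^2 =
  ((fst x - fst a)^2 + (snd x - snd a)^2)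
  - 2*l*((fst x - fst a)*(fst b - fst a) + (snd x - snd a)*(snd b - snd a))
  + l^2*((fst b - fst a)^2 + (snd b - snd a)^2).
Proof. ring. Qed.

Lemma min_exists x s : exists r, is_min_dist x s r.
Proof.
  unfold segment, point in *. destruct s as [[a1 a2] [b1 b2]]. destruct x as [x1 x2].
  set (A := (x1 - a1)^2 + (x2 - a2)^2).
  set (B := (x1 - a1)*(b1 - a1) + (x2 - a2)*(b2 - a2)).
  set (C := (b1 - a1)^2 + (b2 - a2)^2).
  pose proof (pow2_ge_0 (b1-a1)). pose proof (pow2_ge_0 (b2-a2)).
  assert (HC : 0 <= C) by (unfold C; lra).
  assert (key : exists m, 0 <= m <= 1 /\ forall l, 0 <= l <= 1 ->
            A - 2*m*B + m^2*C <= A - 2*l*B + l^2*C).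
  { destruct (Req_dec C 0) as [C0|C0].
    - assert (HB0 : B = 0).
      { unfold B. assert (E1 : (b1 - a1)^2 = 0) by (unfold C in C0; lra). assert (F1 : b1 - a1 = 0) by nra.
        assert (E2 : (b2 - a2)^2 = 0) by (unfold C in C0; lra). assert (F2 : b2 - a2 = 0) by nra.
        rewrite F1, F2; ring. }
      exists 0. split; [lra|]. intros l _. rewrite C0, HB0. lra.
    - destruct (Rle_dec B 0).
      + exists 0. split; [lra|]. intros l Hl.
        assert (0 <= l^2*C) by (apply Rmult_le_pos; [apply pow2_ge_0|lra]).
        assert (0 <= l*(-B)) by (apply Rmult_le_pos; lra). lra.
      + destruct (Rle_dec C B).
        * exists 1. split; [lra|]. intros l Hl.
          assert (l*C <= C) by (rewrite <- (Rmult_1_l C) at 2; apply Rmult_le_compat_r; lra).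
          assert (0 <= (1-l)*(2*B-(1+l)*C)) by (apply Rmult_le_pos; lra).
          replace (A - 2 * l * B + l ^ 2 * C) with
            (A - 2*1*B + 1^2*C + (1-l)*(2*B-(1+l)*C)) by ring. lra.
        * exists (B/C). split.
          { assert (Cp : 0 < C) by (destruct HC as [h|h]; [exact h| symmetry in h; contradiction]).
            split.
            apply Rmult_le_pos; [lra| left; apply Rinv_0_lt_compat; lra].
            apply Rmult_le_reg_r with C; [lra|]. unfold Rdiv.
            rewrite Rmult_assoc, Rinv_l by lra. lra. }
          intros l _. set (m := B/C).
          assert (Bm : B = m * C) by (unfold m; field; exact C0).
          rewrite Bm.
          assert (0 <= C*(l-m)^2) by (apply Rmult_le_pos; [lra|apply pow2_ge_0]).
          replace (A - 2 * l * (m*C) + l ^ 2 * C) with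
            (A - 2*m*(m*C) + m^2*C + C*(l-m)^2) by ring. lra. }
  destruct key as [m [Hm Hmin]].
  set (q := ((1-m)*a1 + m*b1, (1-m)*a2 + m*b2)).
  exists (edist (x1,x2) q). split.
  - exists q. split; [|reflexivity]. exists m. split; [exact Hm| reflexivity].
  - intros q' [l [Hl ->]]. unfold edist, q. cbn [fst snd].
    apply sqrt_le_1_alt.
    replace ((x1 - ((1 - l) * a1 + l * b1)) ^ 2 + (x2 - ((1 - l) * a2 + l * b2)) ^ 2)
      with (A - 2*l*B + l^2*C) by (unfold A, B, C; ring).
    replace ((x1 - ((1 - m) * a1 + m * b1)) ^ 2 + (x2 - ((1 - m) * a2 + m * b2)) ^ 2)
      with (A - 2*m*B + m^2*C) by (unfold A, B, C; ring).
    apply Hmin; exact Hl.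
Qed.

Lemma seg_spec x s : is_min_dist x s (seg_dist x s).
Proof.
  unfold seg_dist. apply epsilon_spec. apply min_exists.
Qed.

Lemma seg_dist_le x s q : on_seg q s -> seg_dist x s <= edist x q.
Proof. intros H. apply (proj2 (seg_spec x s)). exact H. Qed.

Lemma seg_dist_att x s : exists q, on_seg q s /\ edist x q = seg_dist x s.
Proof. exact (proj1 (seg_spec x s)). Qed.

Lemma edist_pos u v : 0 <= edist u v.
Proof. apply sqrt_pos. Qed.

Lemma seg_dist_nonneg x s : 0 <= seg_dist x s.
Proof. destruct (seg_dist_att x s) as [q [_ E]]. rewrite <- E. apply edist_pos. Qed.

Lemma tri_gen a1 a2 b1 b2 :
  sqrt ((a1+b1)^2+(a2+b2)^2) <= sqrt (a1^2+a2^2) + sqrt (b1^2+b2^2).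
Proof.
  assert (HY: 0 <= a1^2+a2^2) by (apply Rplus_le_le_0_compat; apply pow2_ge_0).
  assert (HZ: 0 <= b1^2+b2^2) by (apply Rplus_le_le_0_compat; apply pow2_ge_0).
  assert (Hcs: a1*b1+a2*b2 <= sqrt(a1^2+a2^2)*sqrt(b1^2+b2^2)).
  { rewrite <- sqrt_mult_alt by auto. destruct (Rle_dec (a1*b1+a2*b2) 0).
    - apply Rle_trans with 0; auto. apply sqrt_pos.
    - rewrite <- (sqrt_pow2 (a1*b1+a2*b2)) by lra. apply sqrt_le_1_alt.
      pose proof (pow2_ge_0 (a1*b2 - a2*b1)).
      replace ((a1 ^ 2 + a2 ^ 2) * (b1 ^ 2 + b2 ^ 2)) with
        ((a1*b1+a2*b2)^2 + (a1*b2 - a2*b1)^2) by ring. lra. }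
  pose proof (sqrt_pos (a1^2+a2^2)). pose proof (sqrt_pos (b1^2+b2^2)).
  rewrite <- (sqrt_pow2 (sqrt (a1^2+a2^2) + sqrt (b1^2+b2^2))) by lra.
  apply sqrt_le_1_alt.
  replace ((sqrt (a1^2+a2^2) + sqrt (b1^2+b2^2))^2) with
    (sqrt (a1^2+a2^2)^2 + sqrt (b1^2+b2^2)^2 + 2*(sqrt (a1^2+a2^2) * sqrt (b1^2+b2^2))) by ring.
  rewrite !pow2_sqrt by auto.
  replace ((a1 + b1) ^ 2 + (a2 + b2) ^ 2) with
    ((a1^2+a2^2) + (b1^2+b2^2) + 2*(a1*b1+a2*b2)) by ring. lra.
Qed.

Lemma triangle u v w : edist u w <= edist u v + edist v w.
Proof.
  unfold edist.
  replace (fst u - fst w) with ((fst u - fst v) + (fst v - fst w)) by ring.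
  replace (snd u - snd w) with ((snd u - snd v) + (snd v - snd w)) by ring.
  apply tri_gen.
Qed.

Lemma edist_scale u v w z k :
  fst u - fst v = k*(fst w - fst z) -> snd u - snd v = k*(snd w - snd z) ->
  edist u v = Rabs k * edist w z.
Proof.
  intros H1 H2. unfold edist. rewrite H1, H2.
  replace ((k * (fst w - fst z)) ^ 2 + (k * (snd w - snd z)) ^ 2) with
    (k^2 * ((fst w - fst z) ^ 2 + (snd w - snd z) ^ 2)) by ring.
  rewrite sqrt_mult_alt by (apply pow2_ge_0).
  rewrite <- Rsqr_pow2, sqrt_Rsqr_abs. reflexivity.
Qed.

Lemma far (H : list segment) (s : segment) (x p : point)
  (Hx : Vf s H x) (Hp : on_seg p s) (Hpx : edist p x = seg_dist x s) t :
  1 <= t -> Vf s H (ray_pt p x t).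
Proof.
  intros Ht u Hu Hus.
  set (y := ray_pt p x t). set (D := edist p x).
  assert (Low : t * D <= seg_dist y s).
  { destruct (seg_dist_att y s) as [q0 [Hq0 E0]]. rewrite <- E0.
    set (k := / t).
    assert (Hk : 0 < k <= 1).
    { unfold k. split. apply Rinv_0_lt_compat; lra.
      rewrite <- Rinv_1. apply Rinv_le_contravar; lra. }
    set (q' := ((1-k)*fst p + k*fst q0, (1-k)*snd p + k*snd q0)).
    assert (Hq' : on_seg q' s).
    { destruct Hp as [l2 [Hl2 Ep]]. destruct Hq0 as [l1 [Hl1 Eq]].
      exists ((1-k)*l2 + k*l1). split. nra.
      unfold q'. rewrite Ep, Eq. simpl. f_equal; ring. }
    assert (E1 : edist x q' = Rabs k * edist y q0).
    { apply edist_scale; unfold q', y, ray_pt, k; simpl; field; lra. }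
    rewrite Rabs_right in E1 by lra.
    pose proof (seg_dist_le x s q' Hq'). rewrite <- Hpx in H0. fold D in H0.
    assert (D <= k * edist y q0) by lra.
    apply Rmult_le_compat_l with (r := t) in H1; [|lra].
    replace (t * (k * edist y q0)) with (edist y q0) in H1; [lra|].
    unfold k. field. lra. }
  destruct (seg_dist_att x u) as [q1 [Hq1 E1]].
  pose proof (seg_dist_le y u q1 Hq1).
  pose proof (triangle y x q1).
  assert (Eyx : edist y x = Rabs (1 - t) * D).
  { apply edist_scale; unfold y, ray_pt; simpl; ring. }
  rewrite Rabs_left1 in Eyx by lra.
  pose proof (Hx u Hu Hus). rewrite <- Hpx in H2. fold D in H2.
  unfold Rgt. lra.
Qed.

Theorem lemma6 (H : list segment) (s : segment) (x p : point)
  (HND : NoDup H) (Hlen : (2 <= length H)%nat)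
  (Hdisj : pairwise_disjoint H) (Hs : In s H)
  (Hx : Vf s H x)
  (Hp : on_seg p s) (Hpx : edist p x = seg_dist x s) :
  exists t0 : R, 0 <= t0 <= 1 /\
    on_boundary (Vf s H) (ray_pt p x t0) /\
    (forall t, t > t0 -> Vf s H (ray_pt p x t)).
Proof.
  assert (Hu : exists u, In u H /\ u <> s).
  { destruct H as [|a [|b H']]; simpl in Hlen; try lia.
    inversion HND as [|a0 l0 Hnin Hnd]; subst.
    destruct (classic (a = s)) as [E|E].
    - exists b. split. simpl; auto. intro Eb. subst. apply Hnin. simpl; auto.
    - exists a. split; simpl; auto. }
  destruct Hu as [u [Hu Hus]].
  assert (N0 : ~ Vf s H (ray_pt p x 0)).
  { intro V. pose proof (V u Hu Hus).
    pose proof (seg_dist_le (ray_pt p x 0) s p Hp).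
    assert (edist (ray_pt p x 0) p = Rabs 0 * edist p x).
    { apply edist_scale; unfold ray_pt; simpl; ring. }
    rewrite Rabs_R0 in H2.
    pose proof (seg_dist_nonneg (ray_pt p x 0) u). lra. }
  set (S := fun v => 0 <= v <= 1 /\ ~ Vf s H (ray_pt p x v)).
  assert (Sb : bound S).
  { exists 1. intros v [Hv _]. lra. }
  assert (Sne : exists v, S v).
  { exists 0. split; [lra|exact N0]. }
  destruct (completeness S Sb Sne) as [m [Hub Hlub]].
  assert (Hm0 : 0 <= m) by (apply Hub; split; [lra|exact N0]).
  assert (Hm1 : m <= 1) by (apply Hlub; intros v [Hv _]; lra).
  assert (After : forall t, t > m -> Vf s H (ray_pt p x t)).
  { intros t Ht. destruct (Rle_dec 1 t).
    - apply (far H s x p Hx Hp Hpx t r).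
    - apply NNPP. intro Hn. assert (S t) by (split; [lra|exact Hn]).
      pose proof (Hub t H0). lra. }
  exists m. split; [lra|]. split; [|exact After].
  intros eps Heps.
  set (D := edist p x).
  assert (HD : 0 <= D) by apply edist_pos.
  set (d := eps / (D + 1)).
  assert (Hd : 0 < d) by (unfold d; apply Rdiv_lt_0_compat; lra).
  assert (HdD : d * D < eps).
  { assert (d * (D+1) = eps) by (unfold d; field; lra). nra. }
  assert (Dist : forall a b, edist (ray_pt p x a) (ray_pt p x b) = Rabs (b - a) * D).
  { intros a b. apply edist_scale; unfold ray_pt; simpl; ring. }
  split.
  - exists (ray_pt p x (m + d)). split.
    + rewrite Dist. replace (m + d - m) with d by ring.
      rewrite Rabs_right by lra. exact HdD.
    + apply After. lra.
  - destruct (classic (exists v, S v /\ m - d < v)) as [[v [Sv Hv]]|Hn].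
    + exists (ray_pt p x v). split; [|exact (proj2 Sv)].
      rewrite Dist. pose proof (Hub v Sv).
      rewrite Rabs_left1 by lra. nra.
    + exfalso. assert (m <= m - d); [|lra].
      apply Hlub. intros v Sv. apply Rnot_lt_le. intro Hlt. apply Hn. eauto.
Qed.
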